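(* Let $q$ be a prime power and $n\ge2$. Let $G$ be the group of $(n+1)\times(n+1)$ matrices over $\mathbb{F}_q[t]$ generated by $\{e_{i,i+1}(a+bt):a,b\in\mathbb{F}_q,1\le i\le n\}$, and for $0\le i\le n-1$ let $K_{\{i\}}=\langle e_{j,j+1}(a+bt):j\in\{1,\dots,n\}\setminus\{i+1\},a,b\in\mathbb{F}_q\rangle$. Then the subgroups $K_{\{0\}},\dots,K_{\{n-1\}}$ boundedly generate $G$, and $$\max_{g\in G}\min\{l: g=g_1\cdots g_l,\ g_1,\dots,g_l\in\textstyle\bigcup_iK_{\{i\}}\}\le 2+4(n+1).$$
   Context: $e_{i,j}(r)$ is the $(n+1)\times(n+1)$ matrix with $1$'s on the diagonal, $r$ in entry $(i,j)$ and $0$ elsewhere. Equivalently, $A\in G$ iff $A$ is upper triangular with $1$'s on the diagonal and, for $i<j$, $A(i,j)$ is a polynomial in $t$ over $\mathbb{F}_q$ of degree $\le j-i$. Subgroups boundedly generate $G$ if some fixed $L$ bounds the number of factors from their union needed to write every element of $G$. *)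

(* Defs.v *)
From HB Require Import structures.
From mathcomp Require Import all_boot all_order all_algebra.
Set Implicit Arguments. Unset Strict Implicit. Unset Printing Implicit Defensive.
Import GRing.Theory.
Local Open Scope ring_scope.

(* Matrices of size (n+1) x (n+1) over F[t] = {poly F}; indices 0..n
   (the paper's index k corresponds to our index k-1). *)
Notation Mat F n := 'M[{poly F}]_(n.+1).

Definition elem (F : fieldType) (n : nat) (i j : 'I_n.+1) (r : {poly F}) : Mat F n :=
  1%:M + r *: delta_mx i j.

Definition esup (F : fieldType) (n : nat) (j : 'I_n) (r : {poly F}) : Mat F n :=
  elem (widen_ord (leqnSn n) j) (lift ord0 j) r.

Definition lin_poly (F : fieldType) (a b : F) : {poly F} := a%:P + b%:P * 'X.

Definition gens (F : fieldType) (n : nat) (J : pred 'I_n) (A : Mat F n) : Prop :=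
  exists (j : 'I_n) (a b : F), J j /\ A = esup j (lin_poly a b).

Definition gen_letter (F : fieldType) (n : nat) (S : Mat F n -> Prop) (x : Mat F n) : Prop :=
  S x \/ exists y, S y /\ x * y = 1 /\ y * x = 1.

Definition gen_group (F : fieldType) (n : nat) (S : Mat F n -> Prop) (A : Mat F n) : Prop :=
  exists s : seq (Mat F n), (forall x, x \in s -> gen_letter S x) /\ A = \prod_(x <- s) x.

Definition Ggrp (F : fieldType) (n : nat) : Mat F n -> Prop :=
  gen_group (gens (fun _ : 'I_n => true)).

(* K_{i} (paper index i in 0..n-1) = < e_{j,j+1}(a+bt) : j <> i+1 (paper indexing) >;
   in our 0-based indexing of superdiagonal positions, j <> i. *)
Definition Ksub (F : fieldType) (n : nat) (i : 'I_n) : Mat F n -> Prop :=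
  gen_group (gens (fun j : 'I_n => j != i)).

Definition prod_of_K_le (F : fieldType) (n : nat) (L : nat) (g : Mat F n) : Prop :=
  exists s : seq (Mat F n),
    (size s <= L)%N /\ (forall x, x \in s -> exists i : 'I_n, Ksub i x) /\ g = \prod_(x <- s) x.

(* Main.v *)
Require Import Defs.
From HB Require Import structures.
From mathcomp Require Import all_boot all_order all_algebra.
From mathcomp Require Import zify.
Set Implicit Arguments. Unset Strict Implicit. Unset Printing Implicit Defensive.
Import GRing.Theory.
Local Open Scope ring_scope.
Lemma comm_abs (R : pzRingType) (u v : R) :
  u * u = 0 -> v * v = 0 -> v * u = 0 ->
  (1 + u) * (1 + v) * (1 - u) * (1 - v) = 1 + u * v.
Proof.
move=> uu vv vu.
have e1 : (1 + v) * (1 - u) = 1 + v - u.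
  by rewrite mulrDl mul1r mulrBr mulr1 vu subr0 addrAC.
have e2 : (1 + u) * (1 + v - u) = 1 + v + u * v.
  rewrite mulrDl mul1r mulrBr mulrDr mulr1 uu subr0.
  by rewrite addrA addrNK.
rewrite -(mulrA (1 + u)) e1 e2.
rewrite mulrBr mulr1 !mulrDl mul1r vv -mulrA vv mulr0 addr0.
by rewrite addr0 addrAC addrK.
Qed.

Lemma prod1X_seq (R : pzRingType) (I : Type) (r : seq I) (X : I -> R) :
  (forall i j, X i * X j = 0) ->
  \prod_(i <- r) (1 + X i) = 1 + \sum_(i <- r) X i.
Proof.
move=> h; elim: r => [|x r IH]; first by rewrite !big_nil addr0.
rewrite !big_cons IH mulrDl mul1r mulrDr mulr1 mulr_sumr.
have -> : \sum_(i <- r) X x * X i = 0 by rewrite big1.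
by rewrite addr0 addrAC -addrA.
Qed.

Lemma prod1X_nat (R : pzRingType) (m : nat) (X : nat -> R) :
  (forall i j, (i < j < m)%N -> X i * X j = 0) ->
  \prod_(0 <= i < m) (1 + X i) = 1 + \sum_(0 <= i < m) X i.
Proof.
elim: m X => [|m IH] X h; first by rewrite !big_geq // addr0.
rewrite !big_nat_recl // IH; last by move=> i j hij; apply: h; lia.
rewrite mulrDl mul1r mulrDr mulr1 mulr_sumr.
have -> : \sum_(0 <= i < m) X 0%N * X i.+1 = 0.
  by rewrite big_nat_cond big1 // => i /andP[/andP[_ hi] _]; apply: h; lia.
by rewrite addr0 addrAC -addrA.
Qed.
Section G.
Variables (F : fieldType) (n : nat).
Implicit Types (S : Mat F n -> Prop) (A B : Mat F n).

Lemma gen1 S : gen_group S 1.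
Proof. by exists [::]; split => //; rewrite big_nil. Qed.

Lemma genM S A B : gen_group S A -> gen_group S B -> gen_group S (A * B).
Proof.
move=> [s [hs ->]] [t [ht ->]]; exists (s ++ t); split; last by rewrite big_cat.
by move=> x; rewrite mem_cat => /orP[/hs|/ht].
Qed.

Lemma genS S A : S A -> gen_group S A.
Proof. by move=> h; exists [:: A]; split; [move=> x; rewrite inE => /eqP->; left|rewrite big_seq1]. Qed.

Lemma gen_prod S I (r : seq I) (f : I -> Mat F n) :
  (forall i, gen_group S (f i)) -> gen_group S (\prod_(i <- r) f i).
Proof.
move=> h; elim: r => [|x r IH]; first by rewrite big_nil; apply: gen1.
by rewrite big_cons; apply: genM.
Qed.

Lemma elem0 (i j : 'I_n.+1) : elem i j (0 : {poly F}) = 1.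
Proof. by rewrite /elem scale0r addr0. Qed.

Lemma delta_mul (i j k l : 'I_n.+1) :
  (delta_mx i j : Mat F n) * delta_mx k l = if j == k then delta_mx i l else 0.
Proof.
rewrite -mulmxE; case: eqP => [->|/eqP h]; first by rewrite mul_delta_mx.
by rewrite mul_delta_mx_0.
Qed.

Lemma sdelta_mul (x y : {poly F}) (i j k l : 'I_n.+1) :
  (x *: delta_mx i j : Mat F n) * (y *: delta_mx k l) =
  (x * y) *: (if j == k then delta_mx i l else 0).
Proof. by rewrite -scalerAl -scalerAr delta_mul scalerA. Qed.

Lemma elemD (i j : 'I_n.+1) (x y : {poly F}) : i != j ->
  elem i j (x + y) = elem i j x * elem i j y.
Proof.
move=> hij; rewrite /elem mulrDl mul1r mulrDr mulr1 sdelta_mul eq_sym (negPf hij).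
by rewrite scaler0 addr0 scalerDl addrAC addrA.
Qed.

Lemma elem_comm (a c b : 'I_n.+1) (x y : {poly F}) : a != c -> c != b -> a != b ->
  elem a b (x * y) = elem a c x * elem c b y * elem a c (- x) * elem c b (- y).
Proof.
move=> hac hcb hab; rewrite /elem !scaleNr.
rewrite (comm_abs (u := x *: delta_mx a c) (v := y *: delta_mx c b)).
- by rewrite sdelta_mul eqxx.
- by rewrite sdelta_mul eq_sym (negPf hac) scaler0.
- by rewrite sdelta_mul eq_sym (negPf hcb) scaler0.
- by rewrite sdelta_mul eq_sym (negPf hab) scaler0.
Qed.

End G.
Section E.
Variables (F : fieldType) (n : nat) (J : pred 'I_n).

Lemma ord_neq m (a b : 'I_m) : ((a : nat) != b) -> a != b.
Proof. by apply: contra => /eqP->. Qed.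

Lemma elem_lin (a b : 'I_n.+1) (k : 'I_n) (p : {poly F}) :
  (a : nat) = k -> (b : nat) = k.+1 -> (size p <= 2)%N -> J k ->
  gen_group (gens J) (elem a b p).
Proof.
move=> ha hb hp hk; apply: genS; exists k, p`_0, p`_1; split => //.
have -> : a = widen_ord (leqnSn n) k by apply: val_inj.
have -> : b = lift ord0 k by apply: val_inj; rewrite /= hb.
congr elem; apply/polyP => i; rewrite /lin_poly coefD coefC coefCM coefX.
case: i => [|[|i]] /=; first by rewrite mulr0 addr0.
  by rewrite add0r mulr1.
by rewrite mulr0 addr0 nth_default //; apply: leq_trans hp _.
Qed.

Lemma elem_gen d : forall (a b : 'I_n.+1) (p : {poly F}),
  (b : nat) = (a + d).+1 -> (size p <= d.+2)%N ->
  (forall k : 'I_n, (a <= k < b)%N -> J k) -> gen_group (gens J) (elem a b p).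
Proof.
elim: d => [|d IH] a b p hb hp hJ.
  have ha : (a < n)%N by have := ltn_ord b; lia.
  apply: (elem_lin (k := Ordinal ha)) => //=; first by lia.
  by apply: hJ => /=; lia.
have hc : (a.+1 < n.+1)%N by have := ltn_ord b; lia.
set c := Ordinal hc.
have hac : a != c by apply: ord_neq => /=; lia.
have hcb : c != b by apply: ord_neq => /=; lia.
have hab : a != b by apply: ord_neq => /=; lia.
have ha : (a < n)%N by have := ltn_ord b; lia.
have hJa : J (Ordinal ha) by apply: hJ => /=; lia.
have lin : forall x : {poly F}, (size x <= 2)%N -> gen_group (gens J) (elem a c x).
  by move=> x hx; apply: (elem_lin (k := Ordinal ha)).
have rest : forall y : {poly F}, (size y <= d.+2)%N -> gen_group (gens J) (elem c b y).
  move=> y hy; apply: IH => //=; first by lia.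
  by move=> k hk; apply: hJ; lia.
rewrite -(poly_take_drop 1%N p) elemD // expr1 mulrC -[take_poly 1%N p]mul1r.
have hs1 : (size (1%R : {poly F}) <= 2)%N by rewrite size_poly1.
have hsX : (size ('X : {poly F}) <= 2)%N by rewrite size_polyX.
have ht : (size (take_poly 1%N p) <= d.+2)%N by apply: leq_trans (size_take_poly _ _) _.
have hd : (size (drop_poly 1%N p) <= d.+2)%N by rewrite size_drop_poly; lia.
rewrite !(elem_comm _ _ hac hcb hab).
repeat apply: genM.
all: first [apply: lin; rewrite ?size_polyN // | apply: rest; rewrite ?size_polyN //].
Qed.

End E.
Section D.
Variables (F : fieldType) (n : nat).

Definition Dmat (M : Mat F n) :=
  (forall i, M i i = 1) /\ (forall i j : 'I_n.+1, (size (M i j) <= j.+1 - i)%N).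

Lemma Dmat_low (M : Mat F n) (i j : 'I_n.+1) : Dmat M -> (j < i)%N -> M i j = 0.
Proof.
move=> [_ h] hji; apply/eqP; rewrite -size_poly_leq0.
by apply: leq_trans (h i j) _; lia.
Qed.

Lemma size_nat_le (b : bool) : (size (b%:R : {poly F}) <= b)%N.
Proof. by case: b; rewrite ?size_poly1 ?size_poly0. Qed.

Lemma elemE (a b i j : 'I_n.+1) (r : {poly F}) :
  elem a b r i j = (i == j)%:R + r * ((i == a) && (j == b))%:R.
Proof. by rewrite /elem !mxE. Qed.

Lemma Dmat_elem (a b : 'I_n.+1) (r : {poly F}) :
  (b : nat) = a.+1 -> (size r <= 2)%N -> Dmat (elem a b r).
Proof.
move=> hb hr; split.
  move=> i; rewrite elemE eqxx.
  case: (i =P a) => [->|_]; last by rewrite mulr0 addr0.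
  have -> : (a == b) = false by apply/negbTE/ord_neq; rewrite hb; lia.
  by rewrite mulr0 addr0.
move=> i j; rewrite elemE.
case: (i =P a) => [->|_]; case: (j =P b) => [->|_] /=; rewrite ?mulr0 ?addr0.
- have -> : (a == b) = false by apply/negbTE/ord_neq; rewrite hb; lia.
  by rewrite add0r mulr1 hb; apply: leq_trans hr _; lia.
- by apply: leq_trans (size_nat_le _) _; case: eqP => [->|]; lia.
- by apply: leq_trans (size_nat_le _) _; case: eqP => [->|]; lia.
- by apply: leq_trans (size_nat_le _) _; case: eqP => [->|]; lia.
Qed.

Lemma Dmat1 : Dmat 1.
Proof.
split=> [i|i j]; first by rewrite !mxE eqxx.
rewrite !mxE; case: eqP => [->|]; rewrite ?size_poly1 ?size_poly0 //; lia.
Qed.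

Lemma Dmat_mul (A B : Mat F n) : Dmat A -> Dmat B -> Dmat (A * B).
Proof.
move=> hA hB; split.
  move=> i; rewrite -mulmxE !mxE (bigD1 i) //= big1 ?addr0.
    by rewrite hA.1 hB.1 mulr1.
  move=> k hk; case: (ltngtP k i) => h.
  - by rewrite (Dmat_low hA h) mul0r.
  - by rewrite (Dmat_low hB h) mulr0.
  - by move: hk; rewrite (val_inj h) eqxx.
move=> i j; rewrite -mulmxE !mxE.
apply: leq_trans (size_sum _ _ _) _.
apply/bigmax_leqP => k _.
case: (eqVneq (A i k) 0) => [->|hA0]; first by rewrite mul0r size_poly0.
case: (eqVneq (B k j) 0) => [->|hB0]; first by rewrite mulr0 size_poly0.
apply: leq_trans (size_polyMleq _ _) _.
have := hA.2 i k; have := hB.2 k j.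
rewrite -size_poly_gt0 in hA0; rewrite -size_poly_gt0 in hB0.
move: (size (A i k)) (size (B k j)) hA0 hB0 (nat_of_ord i) (nat_of_ord j) (nat_of_ord k) => x y ? ? ? ? ? ? ?; lia.
Qed.

End D.
Lemma size_lin (F : fieldType) (a b : F) : (size (lin_poly a b) <= 2)%N.
Proof.
rewrite /lin_poly; apply: leq_trans (size_polyD _ _) _; rewrite geq_max.
apply/andP; split; first by apply: leq_trans (size_polyC_leq1 _) _.
apply: leq_trans (size_polyMleq _ _) _; rewrite size_polyX.
by have := size_polyC_leq1 b; lia.
Qed.

Lemma Ggrp_Dmat (F : fieldType) (n : nat) (g : Mat F n) : Ggrp g -> Dmat g.
Proof.
move=> [s [hs ->]]; elim: s hs => [|x s IH] hs; first by rewrite big_nil; exact: Dmat1.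
rewrite big_cons; apply: Dmat_mul; last by apply: IH => y hy; apply: hs; rewrite inE hy orbT.
have hdm : forall (j : 'I_n) (r : {poly F}), (size r <= 2)%N -> Dmat (esup j r).
  by move=> j r hr; apply: Dmat_elem => //=.
case: (hs x (mem_head _ _)) => [[j [a [b [_ ->]]]]|[y [[j [a [b [_ ->]]]] [hxy hyx]]]].
  exact/hdm/size_lin.
have hne : widen_ord (leqnSn n) j != lift ord0 j by apply: ord_neq => /=; rewrite /bump; lia.
have -> : x = esup j (- lin_poly a b).
  rewrite -[x]mulr1 -[1 in LHS](@elem0 F n (widen_ord (leqnSn n) j) (lift ord0 j)).
  rewrite -(subrr (lin_poly a b)) elemD // mulrA.
  by rewrite /esup in hxy; rewrite hxy mul1r.
by apply: hdm; rewrite size_polyN size_lin.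
Qed.
Lemma Dmat_gen (F : fieldType) (n : nat) (J : pred 'I_n) (M : Mat F n) :
  Dmat M ->
  (forall i j : 'I_n.+1, (i < j)%N -> M i j != 0 -> forall k : 'I_n, (i <= k < j)%N -> J k) ->
  gen_group (gens J) M.
Proof.
move=> hD hJ.
pose c (a b : 'I_n.+1) := if (a < b)%N then M a b else 0.
pose R (a : 'I_n.+1) := \sum_(b : 'I_n.+1) c a b *: (delta_mx a b : Mat F n).
have hR : forall a, 1 + R a = \prod_(b : 'I_n.+1) elem a b (c a b).
  move=> a; apply: esym; apply: (@prod1X_seq _ _ _ (fun b => c a b *: delta_mx a b)).
  move=> i j; rewrite sdelta_mul /c; case: ltnP => h; last by rewrite mul0r scale0r.
  by rewrite (_ : (i == a) = false) ?scaler0 //; apply/negbTE/ord_neq; lia.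
have hRR : forall a a' : 'I_n.+1, (a' < a)%N -> R a * R a' = 0.
  move=> a a' ha; rewrite mulr_suml big1 // => b _; rewrite mulr_sumr big1 // => b' _.
  rewrite sdelta_mul /c; case: ltnP => h; last by rewrite !mul0r scale0r.
  by rewrite (_ : (b == a') = false) ?scaler0 //; apply/negbTE/ord_neq; lia.
have entry : forall a i j, R a i j = if a == i then c i j else 0.
  move=> a i j; rewrite /R summxE; under eq_bigr do rewrite !mxE.
  case: (a =P i) => [->|h].
    rewrite (bigD1 j) //= big1 ?addr0 ?eqxx ?mulr1 // => b hb.
    by rewrite eq_sym (negPf hb) andbF mulr0.
  by rewrite big1 // => b _; rewrite (_ : (i == a) = false) ?mulr0 //; apply/negP => /eqP e; apply: h.
have hM : M = \prod_(0 <= k < n.+1) (1 + R (inord (n - k))).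
  rewrite prod1X_nat; last first.
    move=> i j hij; apply: hRR; rewrite !inordK; lia.
  rewrite big_mkord.
  have -> : \sum_(k < n.+1) R (inord (n - k)) = \sum_(a < n.+1) R a.
    rewrite [RHS](reindex_inj rev_ord_inj); apply: eq_bigr => k _; congr R.
    by apply: val_inj; rewrite /= inordK; lia.
  apply/matrixP => i j; rewrite !mxE summxE.
  under eq_bigr do rewrite entry.
  rewrite -big_mkcond big_pred1_eq /c.
  case: ltngtP => h.
  - by rewrite (_ : (i == j) = false) ?add0r //; apply/negbTE/ord_neq; lia.
  - by rewrite (_ : (i == j) = false) ?addr0 ?(Dmat_low hD h) //; apply/negbTE/ord_neq; lia.
  - by rewrite (val_inj h) eqxx hD.1 addr0.
rewrite hM; apply: gen_prod => k; rewrite hR; apply: gen_prod => b.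
set a : 'I_n.+1 := inord (n - k).
rewrite /c; case: ltnP => h; last by rewrite elem0; apply: gen1.
case: (eqVneq (M a b) 0) => [->|hnz]; first by rewrite elem0; apply: gen1.
apply: (@elem_gen F n J (b - a - 1)); first by lia.
  by have := hD.2 a b; lia.
exact: hJ.
Qed.
Lemma sum_delta (F : fieldType) N (f : 'I_N -> {poly F}) (j : 'I_N) :
  \sum_k f k * (k == j)%:R = f j.
Proof.
rewrite (bigD1 j) //= eqxx mulr1 big1 ?addr0 // => k hk.
by rewrite (negPf hk) mulr0.
Qed.

Lemma size_eq_le (F : fieldType) N (i j : 'I_N) :
  (size (((i == j) : bool)%:R : {poly F}) <= j.+1 - i)%N.
Proof.
apply: leq_trans (size_nat_le _ _) _; case: eqP => [->|]; lia.
Qed.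

Lemma main_aux (F : finFieldType) (n : nat) (hn : (2 <= n)%N) :
  (exists L : nat, forall g : Mat F n, Ggrp g -> prod_of_K_le L g) /\
  (forall g : Mat F n, Ggrp g -> prod_of_K_le (2 + 4 * n.+1)%N g).
Proof.
suff H : forall g : Mat F n, Ggrp g -> prod_of_K_le (2 + 4 * n.+1)%N g.
  by split => //; exists (2 + 4 * n.+1)%N.
case: n hn => [|[|m]] // _ g /Ggrp_Dmat hD.
have [hd1 hd2] := hD.
pose i0 : 'I_m.+3 := ord0.
pose im : 'I_m.+3 := ord_max.
pose i1 : 'I_m.+3 := inord 1.
pose A : Mat F m.+2 := \matrix_(i, j) if i == i0 then (i == j)%:R else g i j.
pose B : Mat F m.+2 := \matrix_(i, j) if (i == i0) && (j != im) then g i j else (i == j)%:R.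
pose D0 : Mat F m.+2 := \matrix_(i, j) if i == i0 then g i j else (i == j)%:R.
pose p := g i0 im.
have h01 : i0 != i1 by apply: ord_neq; rewrite /= inordK.
have h1m : i1 != im by apply: ord_neq; rewrite /= inordK.
have h0m : i0 != im by apply: ord_neq.
have hBC : B * elem i0 im p = D0.
  apply/matrixP => i j; rewrite -mulmxE !mxE.
  under eq_bigr do rewrite elemE mulrDr.
  rewrite big_split /= sum_delta (bigD1 i0) //= big1 ?addr0; last first.
    by move=> k /negPf ->; rewrite mulr0 mulr0.
  rewrite /B !mxE.
  case: (i =P i0) => [->|hi] /=.
    rewrite hd1 mul1r.
    case: (j =P im) => [->|hj] /=; first by rewrite mulr1 add0r.
    by rewrite mulr0 addr0.
  by rewrite mul0r addr0.
have hAD : A * D0 = g.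
  apply/matrixP => i j; rewrite -mulmxE !mxE.
  case: (i =P i0) => [->|hi].
    rewrite (bigD1 i0) //= big1 ?addr0.
      by rewrite /A /D0 !mxE /= mul1r.
    move=> k hk; rewrite /A !mxE /=.
    by rewrite (_ : (i0 == k) = false) ?mul0r //; apply/negbTE; rewrite eq_sym.
  rewrite -[RHS](sum_delta (fun k => g i k) j); apply: eq_bigr => k _.
  rewrite /A /D0 !mxE (_ : (i == i0) = false); last by apply/negbTE/eqP.
  case: (k =P i0) => [->|hk] //=.
  rewrite (Dmat_low hD) ?mul0r //.
  by rewrite /= lt0n; apply/eqP => e; apply: hi; apply: val_inj.
pose y0 := take_poly 1%N p.
pose y1 := drop_poly 1%N p.
have hC : elem i0 im p =
  elem i0 i1 1 * elem i1 im y0 * elem i0 i1 (-1) * elem i1 im (- y0) *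
  (elem i0 i1 'X * elem i1 im y1 * elem i0 i1 (- 'X) * elem i1 im (- y1)).
  rewrite -{1}(poly_take_drop 1%N p) elemD // expr1 (mulrC (drop_poly 1%N p)).
  by rewrite -[take_poly 1%N p]mul1r !(elem_comm _ _ h01 h1m h0m).
pose k0 : 'I_m.+2 := ord0.
pose km : 'I_m.+2 := ord_max.
pose k1 : 'I_m.+2 := inord 1.
have hA : Ksub k0 A.
  apply: Dmat_gen.
    split=> [i|i j]; rewrite /A mxE; case: ifP => _; rewrite ?eqxx ?hd1 ?hd2 //.
    exact: size_eq_le.
  move=> i j hij; rewrite /A mxE; case: (i =P i0) => [ei|hi] /=.
    rewrite ei in hij *; rewrite (_ : (i0 == j) = false) ?eqxx //.
    by apply/negbTE/ord_neq; rewrite /=; lia.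
  have : (0 < i)%N by rewrite lt0n; apply/eqP => e; apply: hi; apply: val_inj.
  by move=> hi0 _ k hk; apply: ord_neq; rewrite /=; lia.
have hB : Ksub km B.
  apply: Dmat_gen.
    split=> [i|i j]; rewrite /B mxE; case: ifP => _; rewrite ?eqxx ?hd1 ?hd2 //.
    exact: size_eq_le.
  move=> i j hij; rewrite /B mxE; case: ifP => [/andP[_ hj]|_] hnz.
    have hj' : (j < m.+2)%N.
      by have := ltn_ord j; move: hj; rewrite -val_eqE /= => ?; lia.
    by move=> k hk; apply: ord_neq; rewrite /=; lia.
  move: hnz; rewrite (_ : (i == j) = false) ?eqxx //.
  by apply/negbTE/ord_neq; lia.
have hv1 : (i1 : nat) = 1%N by rewrite /= inordK.
have hE1 : forall x : {poly F}, (size x <= 2)%N -> Ksub k1 (elem i0 i1 x).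
  move=> x hx; apply: (@elem_lin F m.+2 _ _ _ k0) => //.
  by apply: ord_neq; rewrite /= inordK.
have hE2 : forall y : {poly F}, (size y <= m.+2)%N -> Ksub k0 (elem i1 im y).
  move=> y hy; apply: (@elem_gen F m.+2 _ m) => //; first by rewrite hv1.
  by move=> k; rewrite hv1 => hk; apply: ord_neq; rewrite /=; lia.
have hp : (size p <= m.+3)%N by have := hd2 i0 im.
have hy0 : (size y0 <= m.+2)%N by apply: leq_trans (size_take_poly _ _) _.
have hy1 : (size y1 <= m.+2)%N by rewrite size_drop_poly; lia.
have hs1 : (size (1%R : {poly F}) <= 2)%N by rewrite size_poly1.
have hsX : (size ('X : {poly F}) <= 2)%N by rewrite size_polyX.
exists [:: A; B; elem i0 i1 1; elem i1 im y0; elem i0 i1 (-1); elem i1 im (- y0);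
  elem i0 i1 'X; elem i1 im y1; elem i0 i1 (- 'X); elem i1 im (- y1)].
split; first by rewrite /=; lia.
split; last by rewrite -hAD -hBC hC !big_cons big_nil mulr1 !mulrA.
move=> x hx.
repeat (case/predU1P: hx => [->|hx]).
all: first [by exists k0 | by exists km | by exists k1; apply: hE1; rewrite ?size_polyN
  | by exists k0; apply: hE2; rewrite ?size_polyN | by rewrite in_nil in hx].
Qed.

Local Close Scope ring_scope.

Theorem lemma7p9 (F : finFieldType) (n : nat) (hn : (2 <= n)%N) :
  (exists L : nat, forall g : Mat F n, Ggrp g -> prod_of_K_le L g) /\
  (forall g : Mat F n, Ggrp g -> prod_of_K_le (2 + 4 * n.+1) g).
Proof. exact: main_aux. Qed.
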